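(* Let $n\ge 3$ be an integer and let $\varphi$ be the automorphism of $F$ with $\varphi(x)=y$, $\varphi(y)=x$. Then $(\varphi(r_1),\varphi(r_2))\sim_{AC}(r_1,r_2)$, where $(r_1,r_2)=\mathrm{AK}(n)=(xyxy^{-1}x^{-1}y^{-1},\ x^ny^{-(n+1)})$.
   Context: $F=F(x,y)$ is the free group on $\{x,y\}$. The Akbulut–Kurby pair is $\mathrm{AK}(n)=(xyxy^{-1}x^{-1}y^{-1},\ x^{n}y^{-(n+1)})$, i.e. the presentation $\langle x,y\mid xyx=yxy,\ x^n=y^{n+1}\rangle$ of the trivial group. The Andrews–Curtis (AC) moves on a pair $(r_1,r_2)\in F^2$ are: replace $r_i$ by $r_ir_j$ ($i\ne j$); replace $r_i$ by $r_i^{-1}$; replace $r_i$ by $w^{-1}r_iw$ for some $w\in F$. Two pairs are AC-equivalent, $\sim_{AC}$, if one can be obtained from the other by a finite sequence of AC-moves. *)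

(* Defs.v *)
(* The free group F = F(x,y) is modelled by freely reduced words. *)
From mathcomp Require Import all_boot.
From Stdlib Require Import Relations.
Set Implicit Arguments. Unset Strict Implicit. Unset Printing Implicit Defensive.

(* A letter is (generator, inverted?); generator false = x, true = y. *)
Definition letter := (bool * bool)%type.
Definition word := seq letter.

Definition x_ : letter := (false, false).
Definition y_ : letter := (true, false).
Definition linv (a : letter) : letter := (a.1, ~~ a.2).

Definition reduce (w : word) : word :=
  foldr (fun a acc => match acc with
                      | b :: t => if b == linv a then t else a :: acc
                      | [::] => [:: a]
                      end) [::] w.

Definition fmul (u v : word) : word := reduce (u ++ v).
Definition finv (w : word) : word := reduce (rev (map linv w)).
Definition fconj (r w : word) : word := reduce (finv w ++ r ++ w).

Definition gpow (g : letter) (k : nat) : word := nseq k g.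
Definition gnpow (g : letter) (k : nat) : word := nseq k (linv g).

Definition phi (w : word) : word := reduce (map (fun a : letter => (~~ a.1, a.2)) w).

Inductive ac_move : word * word -> word * word -> Prop :=
| ac_mul1 r1 r2 : ac_move (r1, r2) (fmul r1 r2, r2)
| ac_mul2 r1 r2 : ac_move (r1, r2) (r1, fmul r2 r1)
| ac_inv1 r1 r2 : ac_move (r1, r2) (finv r1, r2)
| ac_inv2 r1 r2 : ac_move (r1, r2) (r1, finv r2)
| ac_conj1 r1 r2 (w : word) : ac_move (r1, r2) (fconj r1 w, r2)
| ac_conj2 r1 r2 (w : word) : ac_move (r1, r2) (r1, fconj r2 w).

Definition ac_equiv : word * word -> word * word -> Prop :=
  clos_refl_trans (word * word) ac_move.

Definition AK1 : word := reduce [:: x_; y_; x_; linv y_; linv x_; linv y_].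
Definition AK2 (n : nat) : word := reduce (gpow x_ n ++ gnpow y_ n.+1).

(* Main.v *)
Require Import Defs.
From mathcomp Require Import all_boot.
From Stdlib Require Import Relations.

Definition step (a : letter) (acc : word) : word :=
  match acc with b :: t => if b == linv a then t else a :: acc | [::] => [:: a] end.

Lemma reduceE w : reduce w = foldr step [::] w. Proof. by []. Qed.

Fixpoint red (w : word) : bool :=
  match w with b :: ((c :: _) as t) => (c != linv b) && red t | _ => true end.

Lemma red_cons a w : red (a :: w) = (if w is c :: _ then c != linv a else true) && red w.
Proof. by case: w. Qed.

Lemma linvK a : linv (linv a) = a.
Proof. by case: a => a1 a2; rewrite /linv /= negbK. Qed.

Lemma red_step a acc : red acc -> red (step a acc).
Proof.
case: acc => [|b t] // H; rewrite /step; case: ifP => E.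
  by move: H; rewrite red_cons => /andP[].
by rewrite red_cons H E.
Qed.

Lemma step_cancel a acc : red acc -> step a (step (linv a) acc) = acc.
Proof.
case: acc => [|b t] /=; first by rewrite eqxx.
rewrite linvK; case: eqP => [->|ne] H.
  case: t H => [|c t] //=; case/andP => /negbTE -> _ //.
by rewrite /= eqxx.
Qed.

Lemma red_foldr acc w : red acc -> red (foldr step acc w).
Proof. by move=> H; elim: w => //= a w IH; apply: red_step. Qed.

Lemma red_reduce u : red (reduce u).
Proof. by rewrite reduceE; apply: red_foldr. Qed.

Lemma foldr_step_comm acc a w : red acc -> red w ->
  foldr step acc (step a w) = step a (foldr step acc w).
Proof.
move=> Ha; case: w => [|b t] //= Hw; case: ifP => [/eqP ->|] //=.
by rewrite step_cancel // red_foldr.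
Qed.

Lemma reduce_cons a u : reduce (a :: u) = step a (reduce u).
Proof. by []. Qed.

Lemma foldr_reduce acc u : red acc -> foldr step acc (reduce u) = foldr step acc u.
Proof.
move=> H; elim: u => // a u IH.
by rewrite reduce_cons /=  foldr_step_comm ?red_reduce // IH.
Qed.

Lemma reduce_cat u v : reduce (u ++ v) = foldr step (reduce v) u.
Proof. by rewrite !reduceE foldr_cat. Qed.

Lemma reduce_redl u v : reduce (reduce u ++ v) = reduce (u ++ v).
Proof. by rewrite !reduce_cat foldr_reduce // red_reduce. Qed.

Lemma reduce_mid p q r : reduce (p ++ reduce q ++ r) = reduce (p ++ q ++ r).
Proof. by rewrite reduce_cat reduce_redl -reduce_cat. Qed.

Lemma reduce_red w : red w -> reduce w = w.
Proof.
elim: w => // a t IH; rewrite red_cons reduce_cons => /andP[h1 h2].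
rewrite IH //; case: t h1 {IH h2} => //= c t h1.
by rewrite (negbTE h1).
Qed.

Lemma reduce_redr p q : reduce (p ++ reduce q) = reduce (p ++ q).
Proof. by rewrite reduce_cat (@reduce_red _ (red_reduce q)) -reduce_cat. Qed.

Lemma reduce_cancel p q a : reduce (p ++ a :: linv a :: q) = reduce (p ++ q).
Proof.
rewrite !reduce_cat; congr foldr.
by rewrite (reduce_cat [:: a; linv a]) /= step_cancel // red_reduce.
Qed.

Definition winv (w : word) : word := rev (map linv w).

Lemma winvK w : winv (winv w) = w.
Proof. by rewrite /winv map_rev revK -map_comp (eq_map linvK) map_id. Qed.

Lemma reduce_cancelw p q w : reduce (p ++ w ++ winv w ++ q) = reduce (p ++ q).
Proof.
elim: w p q => // a w IH p q.
have -> : p ++ (a :: w) ++ winv (a :: w) ++ q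
   = (rcons p a) ++ w ++ winv w ++ (linv a :: q).
  by rewrite /winv /= rev_cons -cats1 -!catA /= -cats1 -catA.
by rewrite IH -cats1 -catA reduce_cancel.
Qed.

Lemma reduce_cancelw' p q w : reduce (p ++ winv w ++ w ++ q) = reduce (p ++ q).
Proof. by rewrite -{2}(winvK w) reduce_cancelw. Qed.

Lemma finvE w : Defs.finv w = reduce (winv w). Proof. by []. Qed.

Lemma fconj_back A w : fconj (fconj A w) (Defs.finv w) = reduce A.
Proof.
rewrite /fconj !finvE reduce_redl.
set g := reduce (winv w).
rewrite (reduce_mid (winv g)).
have -> : winv g ++ (g ++ A ++ w) ++ g = (winv g ++ g ++ A ++ w) ++ reduce (winv w)
  by rewrite -!catA.
rewrite reduce_redr -!catA (reduce_cancelw' [::]) /=.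
by rewrite -[A ++ _ ++ _]cats0 -!catA (reduce_cancelw A [::]) cats0.
Qed.

Lemma mulc A u w : ac_equiv (A, u) (reduce A, fmul u (fconj A w)).
Proof.
apply: rt_trans; first by apply: rt_step; apply: (ac_conj1 A u w).
apply: rt_trans; first by apply: rt_step; apply: ac_mul2.
rewrite -(fconj_back A w); apply: rt_step; apply: ac_conj1.
Qed.

Definition D : word := [:: x_; y_; x_].
Definition D' : word := [:: y_; x_; y_].

Inductive eqv : word -> word -> Prop :=
| eqv_refl u : eqv u u
| eqv_sym u v : eqv u v -> eqv v u
| eqv_trans u v w : eqv u v -> eqv v w -> eqv u w
| eqv_cancel p q a : eqv (p ++ a :: linv a :: q) (p ++ q)
| eqv_rel p q : eqv (p ++ D ++ q) (p ++ D' ++ q).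

Arguments eqv_sym {u v}.
Arguments eqv_trans {u} v {w}.

Lemma finv_cat u v : Defs.finv (u ++ v) = reduce (winv v ++ winv u).
Proof. by rewrite finvE /winv map_cat rev_cat. Qed.

Lemma rel_fwd p q : ac_equiv (AK1, reduce (p ++ D ++ q)) (AK1, reduce (p ++ D' ++ q)).
Proof.
apply: rt_trans; first by apply: rt_step; apply: ac_inv1.
apply: rt_trans; first by apply: (mulc _ _ (D ++ q)).
have -> : reduce (Defs.finv AK1) = Defs.finv AK1 by vm_compute.
apply: rt_trans; first by apply: rt_step; apply: ac_inv1.
have -> : Defs.finv (Defs.finv AK1) = AK1 by vm_compute.
have -> : fmul (reduce (p ++ D ++ q)) (fconj (Defs.finv AK1) (D ++ q)) = reduce (p ++ D' ++ q).
  have hA : Defs.finv AK1 = D' ++ winv D by vm_compute.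
  rewrite /fmul /fconj reduce_redl reduce_redr finv_cat reduce_mid hA -!catA.
  rewrite catA (reduce_cancelw (p ++ D)) -catA reduce_cancelw.
  by rewrite catA (reduce_cancelw' (p ++ D')) -catA.
exact: rt_refl.
Qed.

Lemma rel_bwd p q : ac_equiv (AK1, reduce (p ++ D' ++ q)) (AK1, reduce (p ++ D ++ q)).
Proof.
apply: rt_trans; first by apply: (mulc _ _ (D' ++ q)).
have -> : reduce AK1 = AK1 by vm_compute.
have -> : fmul (reduce (p ++ D' ++ q)) (fconj AK1 (D' ++ q)) = reduce (p ++ D ++ q).
  have hA : AK1 = D ++ winv D' by vm_compute.
  rewrite /fmul /fconj reduce_redl reduce_redr finv_cat reduce_mid hA -!catA.
  rewrite catA (reduce_cancelw (p ++ D')) -catA reduce_cancelw.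
  by rewrite catA (reduce_cancelw' (p ++ D)) -catA.
exact: rt_refl.
Qed.

Lemma eqv_ac u v : eqv u v ->
  ac_equiv (AK1, reduce u) (AK1, reduce v) /\ ac_equiv (AK1, reduce v) (AK1, reduce u).
Proof.
elim => {u v}.
- by move=> u; split; apply: rt_refl.
- by move=> u v _ [h1 h2].
- by move=> u v w _ [h1 h2] _ [h3 h4]; split; apply: rt_trans; eauto.
- by move=> p q a; rewrite reduce_cancel; split; apply: rt_refl.
- by move=> p q; split; [apply: rel_fwd | apply: rel_bwd].
Qed.

Lemma eqv_ctx p q u v : eqv u v -> eqv (p ++ u ++ q) (p ++ v ++ q).
Proof.
move=> H; elim: H p q => {u v}.
- by move=> *; apply: eqv_refl.
- by move=> u v _ IH p q; apply: eqv_sym.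
- by move=> u v w _ IH1 _ IH2 p q; apply: eqv_trans (IH1 p q) (IH2 p q).
- move=> p0 q0 a p q; have := eqv_cancel (p ++ p0) (q0 ++ q) a.
  by rewrite -!catA.
- move=> p0 q0 p q; have := eqv_rel (p ++ p0) (q0 ++ q).
  by rewrite -!catA.
Qed.

Arguments eqv_ctx p q {u v}.

Lemma eqv_cat a b c d : eqv a b -> eqv c d -> eqv (a ++ c) (b ++ d).
Proof.
move=> h1 h2; apply: (@eqv_trans _ (b ++ c)).
  by have := eqv_ctx [::] c h1; rewrite /=.
by have := eqv_ctx b [::] h2; rewrite !cats0.
Qed.

Arguments eqv_cat {a b c d}.

Definition X_ : letter := linv x_.
Definition Y_ : letter := linv y_.

Lemma eqv_yD n : eqv (nseq n y_ ++ D) (D ++ nseq n x_).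
Proof.
elim: n => [|n IH]; first by rewrite cats0; apply: eqv_refl.
have base : eqv ([:: y_] ++ D) (D ++ [:: x_]).
  by apply: eqv_sym; have := eqv_rel [::] [:: x_].
apply: (@eqv_trans _ ([:: y_] ++ D ++ nseq n x_)).
  by apply: (eqv_cat (eqv_refl [:: y_]) IH).
rewrite catA; apply: (@eqv_trans _ ((D ++ [:: x_]) ++ nseq n x_)).
  by apply: eqv_cat base (eqv_refl _).
by rewrite -catA; apply: eqv_refl.
Qed.

Lemma eqv_XD n : eqv (nseq n X_ ++ D) (D ++ nseq n Y_).
Proof.
elim: n => [|n IH]; first by rewrite cats0; apply: eqv_refl.
have base : eqv ([:: X_] ++ D) (D ++ [:: Y_]).
  apply: (@eqv_trans _ [:: X_; x_; y_; x_; y_; Y_]).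
    by apply: eqv_sym; have := eqv_cancel [:: X_; x_; y_; x_] [::] y_.
  apply: (@eqv_trans _ [:: X_; x_; x_; y_; x_; Y_]).
    by apply: eqv_sym; have := eqv_rel [:: X_; x_] [:: Y_].
  by have := eqv_cancel [::] [:: x_; y_; x_; Y_] X_.
apply: (@eqv_trans _ ([:: X_] ++ D ++ nseq n Y_)).
  by apply: (eqv_cat (eqv_refl [:: X_]) IH).
rewrite catA; apply: (@eqv_trans _ ((D ++ [:: Y_]) ++ nseq n Y_)).
  by apply: eqv_cat base (eqv_refl _).
by rewrite -catA; apply: eqv_refl.
Qed.

Lemma eqv_main n : eqv (winv D ++ nseq n y_ ++ nseq n.+1 X_ ++ D) (nseq n x_ ++ nseq n.+1 Y_).
Proof.
apply: (@eqv_trans _ (winv D ++ nseq n y_ ++ D ++ nseq n.+1 Y_)).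
  by apply: eqv_cat (eqv_refl _) (eqv_cat (eqv_refl _) (eqv_XD _)).
apply: (@eqv_trans _ (winv D ++ (D ++ nseq n x_) ++ nseq n.+1 Y_)).
  by apply: (eqv_cat (eqv_refl _)); rewrite catA; exact: (eqv_cat (eqv_yD n) (eqv_refl _)).

set r := nseq n x_ ++ nseq n.+1 Y_.
rewrite -catA.
apply: (@eqv_trans _ ([:: X_; Y_] ++ y_ :: x_ :: r)).
  by have := eqv_cancel [:: X_; Y_] (y_ :: x_ :: r) X_.
apply: (@eqv_trans _ ([:: X_] ++ x_ :: r)).
  by have := eqv_cancel [:: X_] (x_ :: r) Y_.
by have := eqv_cancel [::] r X_.
Qed.

Lemma neq_linv a : a != linv a.
Proof. by case: a => a1 a2; rewrite /linv xpair_eqE eqxx /=; case: a2. Qed.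

Lemma red_nseq2 n m a b : b != linv a -> red (nseq n a ++ nseq m b).
Proof.
move=> hab.
have hb : forall m, red (nseq m b).
  elim=> // k IH; change (red (b :: nseq k b)); rewrite red_cons IH andbT.
  by case: k {IH} => // k; exact: neq_linv.
elim: n => [|n IH]; first exact: hb.
change (red (a :: (nseq n a ++ nseq m b))).
rewrite red_cons IH andbT.
by case: n {IH} => [|n]; [case: m | exact: neq_linv].
Qed.

Theorem lemma4 (n : nat) (hn : 3 <= n) :
  ac_equiv (phi AK1, phi (AK2 n)) (AK1, AK2 n).
Proof.
have hAK2 : AK2 n = nseq n x_ ++ nseq n.+1 Y_.
  by rewrite /AK2 reduce_red //; apply: red_nseq2.
have hphi : phi (AK2 n) = reduce (nseq n y_ ++ nseq n.+1 X_).
  by rewrite /phi hAK2 map_cat !map_nseq.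
rewrite hphi.
apply: rt_trans; first by apply: rt_step; apply: ac_inv1.
have -> : Defs.finv (phi AK1) = AK1 by vm_compute.
apply: rt_trans; first by apply: rt_step; apply: (ac_conj2 _ _ D).
have -> : fconj (reduce (nseq n y_ ++ nseq n.+1 X_)) D
          = reduce (winv D ++ nseq n y_ ++ nseq n.+1 X_ ++ D).
  have hD : Defs.finv D = winv D by vm_compute.
  by rewrite /fconj hD reduce_mid -catA.
have -> : AK2 n = reduce (nseq n x_ ++ nseq n.+1 Y_) by [].
exact: (eqv_ac _ _ (eqv_main n)).1.
Qed.
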